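(* For all integers $n,k,p$ with $n\ge 9$, $3\le k\le n/3$ and $p\ge\max\{k-1,\lceil n/(k-1)\rceil\}$, there exists a feasible homogeneous PV graph $\vec G_R$ with $n$ sites, $k$ carriers and period $p$ such that $$\mathcal M(\vec G_R)\ \ge\ (k-2)(p+1)+\left\lfloor \frac{n}{k-1}\right\rfloor .$$ (This holds even though the agent knows $\vec G_R$, $k$, $p$ and has unlimited memory.)
   Context: A PV (periodically varying) system consists of a finite set $S$ of $n$ sites and a set $C$ of $k\le n$ carriers. Each carrier $c$ has a route $\pi(c)=\langle x_0,\dots,x_{p(c)-1}\rangle$, a finite sequence of sites (repetitions allowed) of length $p(c)\ge1$ called its period; $\pi(c)[j]=x_{j\bmod p(c)}$. At each time $t\in\mathbb N$ carrier $c$ is at $\pi(c)[t]$ and moves to $\pi(c)[t+1]$. The PV graph $\vec G_R$ is the directed edge-labelled multigraph on $S$ with edges $(x_i,x_{i+1},i)$, $0\le i<p(c)$, for every carrier. The period of the system is $p=\max_c p(c)$; the system is homogeneous if all $p(c)$ are equal, heterogeneous otherwise. An exploring agent is injected at time $0$ at a site of $\mathrm{start}(\vec G_R)=\{\pi(c)[0]:c\in C\}$; if at time $t$ it is at site $x$ it must either ride one step with some carrier $c$ with $\pi(c)[t]=x$ (one move, to $\pi(c)[t+1]$) or halt; it cannot wait. A walk is a concrete cover if it visits every site. A strategy solves PVG-Exploration of $\vec G_R$ if from every injection site the agent visits all sites and halts in finite time. $\vec G_R$ is feasible if from the starting point of every carrier some realizable walk is a concrete cover. For feasible $\vec G_R$,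 $\mathcal M(\vec G_R)$ denotes the minimum, over all deterministic strategies solving PVG-Exploration of $\vec G_R$ (which may use full knowledge of $\vec G_R$ and unlimited memory), of the maximum over injection sites of the number of moves performed. *)

(* Defs.v *)
From mathcomp Require Import all_boot.
Set Implicit Arguments. Unset Strict Implicit. Unset Printing Implicit Defensive.

Section PV.
Variables (n k p : nat).
(* A homogeneous PV system with sites 'I_n, carriers 'I_k and common period p:
   carrier c has route <R c 0, ..., R c (p-1)>; values R c t for t >= p are
   irrelevant. *)
Variable R : 'I_k -> nat -> 'I_n.

Definition pv_at (c : 'I_k) (t : nat) : 'I_n := R c (t %% p).

Definition in_start (x : 'I_n) : Prop := exists c : 'I_k, pv_at c 0 = x.

Fixpoint realizable (x : 'I_n) (t : nat) (w : seq 'I_k) : Prop :=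
  match w with
  | [::] => True
  | c :: w' => pv_at c t = x /\ realizable (pv_at c t.+1) t.+1 w'
  end.

Fixpoint visited (x : 'I_n) (t : nat) (w : seq 'I_k) : seq 'I_n :=
  x :: match w with
       | [::] => [::]
       | c :: w' => visited (pv_at c t.+1) t.+1 w'
       end.

Definition concrete_cover (x0 : 'I_n) (w : seq 'I_k) : Prop :=
  forall y : 'I_n, y \in visited x0 0 w.

Definition feasible : Prop :=
  forall c : 'I_k, exists w : seq 'I_k,
    realizable (pv_at c 0) 0 w /\ concrete_cover (pv_at c 0) w.

(* A deterministic strategy with full knowledge of the system and unlimited
   memory: given the injection site and the full history of moves so far
   (the time is the length of the history), it either rides a carrier
   (Some c) or halts (None). *)
Definition strategy := 'I_n -> seq 'I_k -> option 'I_k.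

Fixpoint follows (s : strategy) (x0 : 'I_n) (h w : seq 'I_k) : Prop :=
  match w with
  | [::] => s x0 h = None
  | c :: w' => s x0 h = Some c /\ follows s x0 (rcons h c) w'
  end.

Definition explores_in (s : strategy) (x0 : 'I_n) (m : nat) : Prop :=
  exists w : seq 'I_k, [/\ follows s x0 [::] w, realizable x0 0 w,
                          concrete_cover x0 w & size w = m].

Definition solves (s : strategy) : Prop :=
  forall x0, in_start x0 -> exists m, explores_in s x0 m.

Definition worst_cost (s : strategy) (m : nat) : Prop :=
  (forall x0, in_start x0 -> exists2 m', m' <= m & explores_in s x0 m') /\
  (exists2 x0, in_start x0 & explores_in s x0 m).

Definition is_M (m : nat) : Prop :=
  (exists s, worst_cost s m) /\ (forall s m', worst_cost s m' -> m <= m').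

End PV.

Definition ceil_div (a b : nat) : nat := (a + b.-1) %/ b.

(* Main.v *)
Require Import Defs.
From mathcomp Require Import all_boot.
From Stdlib Require Import Lia Classical.
Ltac tolia := intros; repeat match goal with
  | H : is_true (_ <= _) |- _ => move/leP: H => H; rewrite -?subn1 -?plusE -?multE -?minusE in H
  | H : is_true (_ < _) |- _ => move/ltP: H => H; rewrite -?subn1 -?plusE -?multE -?minusE in H
  | H : @eq nat _ _ |- _ => rewrite -?subn1 -?plusE -?multE -?minusE in H; move: H
  | |- is_true (_ <= _) => apply/leP
  | |- is_true (_ < _) => apply/ltP
  end; intros; rewrite -?subn1 -?plusE -?multE -?minusE.

Lemma ex_min (P : nat -> Prop) : (exists n, P n) -> exists n, P n /\ forall m, P m -> n <= m.
Proof.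
move=> [n0 Pn0]; apply: NNPP => H.
have K : forall n m, m <= n -> ~ P m.
  elim=> [|n IH] m.
    rewrite leqn0 => /eqP -> P0; apply: H; exists 0; split=> // m0 _.
  rewrite leq_eqVlt => /orP [/eqP -> Pn|]; last exact: IH.
  apply: H; exists n.+1; split=> // m0 Pm; rewrite ltnNge; apply/negP => Hm.
  exact: (IH m0 Hm).
exact: (K n0 n0 (leqnn _) Pn0).
Qed.

Section Gen.
Variables (n k p : nat) (R : 'I_k -> nat -> 'I_n).

Lemma size_visited x t w : size (visited p R x t w) = (size w).+1.
Proof. by elim: w x t => [|c w IH] x t //=; rewrite IH. Qed.

Lemma visited_nth x t w : realizable p R x t w ->
  forall d i, 0 < i <= size w -> exists c, pv_at p R c (t + i) = nth d (visited p R x t w) i.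
Proof.
elim: w x t => [|c w IH] x t /=; first by move=> _ d i; rewrite ltnNge => /andP [/negP].
move=> [Hc Hr] d [|[|i]] //= Hi.
  by exists c; rewrite addn1; case: (w) {IH Hr Hi}.
have Hi' : 0 < i.+1 <= size w by [].
have [c' Hc'] := IH _ _ Hr d i.+1 Hi'.
by exists c'; rewrite -Hc' addSnnS.
Qed.

Lemma strat_follows (W : seq 'I_k) (x0 : 'I_n) : forall w h, drop (size h) W = w ->
  follows (fun (_ : 'I_n) (h : seq 'I_k) => ohead (drop (size h) W)) x0 h w.
Proof.
elim=> [|c w IH] h /= Hd; first by rewrite Hd.
split; first by rewrite Hd.
apply: IH; rewrite size_rcons -addn1 addnC -drop_drop Hd; by rewrite drop1.
Qed.

Lemma is_M_exists (B : nat) (W : seq 'I_k) (xs : 'I_n) :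
  (forall x0, in_start p R x0 -> x0 = xs) -> in_start p R xs ->
  realizable p R xs 0 W -> concrete_cover p R xs W ->
  (forall w, realizable p R xs 0 w -> concrete_cover p R xs w -> B <= size w) ->
  exists m, is_M p R m /\ B <= m.
Proof.
move=> Hst Hxs HW HC HB.
have Hex : explores_in p R (fun (_ : 'I_n) (h : seq 'I_k) => ohead (drop (size h) W)) xs (size W).
  exists W; split=> //; exact: (strat_follows W xs W [::] (drop0 W)).
have Hw : worst_cost p R (fun (_ : 'I_n) (h : seq 'I_k) => ohead (drop (size h) W)) (size W).
  split; last by exists xs.
  move=> x0 Hx0; rewrite (Hst x0 Hx0); by exists (size W).
have Hex2 : exists m, exists s, worst_cost p R s m by exists (size W); exists (fun (_ : 'I_n) (h : seq 'I_k) => ohead (drop (size h) W)).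
have [m [[s Hs] Hmin]] := ex_min (fun m => exists s, worst_cost p R s m) Hex2.
exists m; split; first by split; [exists s|move=> s' m' H; apply: Hmin; exists s'].
case: Hs => [H1 _]; have [m' Hm' [w [_ Hr Hc Hsz]]] := H1 _ Hxs.
by apply: leq_trans Hm'; rewrite -Hsz; apply: HB.
Qed.

Lemma visited_head d x t w : nth d (visited p R x t w) 0 = x.
Proof. by case: w. Qed.

Lemma lower_bound (Ld : 'I_k -> 'I_n) (xs : 'I_n) :
  0 < p -> (forall d, Ld d != xs) -> injective Ld ->
  (forall c t d, pv_at p R c t = Ld d -> t %% p = p.-1) ->
  forall w, realizable p R xs 0 w -> concrete_cover p R xs w -> k * p - 1 <= size w.
Proof.
move=> p0 Hne Hinj HL w Hr Hc.
rewrite leqNgt; apply/negP => Hlt.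
pose idx d := index (Ld d) (visited p R xs 0 w).
have Hidx d : [/\ idx d <= size w, idx d %% p = p.-1 & nth xs (visited p R xs 0 w) (idx d) = Ld d].
  have Hin := Hc (Ld d).
  have Hn : nth xs (visited p R xs 0 w) (idx d) = Ld d by rewrite nth_index.
  have Hs : idx d < (size w).+1 by rewrite -(size_visited xs 0 w) index_mem.
  have Hi0 : 0 < idx d.
    rewrite lt0n; apply/negP => /eqP H0; move: Hn; rewrite H0 visited_head => H.
    by move: (Hne d); rewrite H eqxx.
  have [c Hcp] := @visited_nth xs 0 w Hr xs (idx d) (introT andP (conj Hi0 Hs)).
  split=> //; apply: (HL c _ d); by rewrite -Hn -Hcp.
have hk : 0 < k by rewrite lt0n; apply/negP=> /eqP k0; move: Hlt; rewrite [in k * p]k0.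
have hkp : k * p = k.-1 * p + p by rewrite -{1}(prednK hk) mulSn addnC.
have Hq d : idx d %/ p < k.-1.
  have [H1 H2 _] := Hidx d.
  have He := divn_eq (idx d) p; rewrite H2 in He.
  rewrite ltnNge; apply/negP => Hge.
  have Hm : k.-1 * p <= idx d %/ p * p by rewrite leq_mul2r Hge orbT.
  move: Hlt Hm H1 He hkp p0; set A := idx d %/ p * p; set B := k.-1 * p; set C := k * p.
  move=> *; tolia; lia.
have Hf : injective (fun d => Ordinal (Hq d)).
  move=> d1 d2 /(congr1 val) /= Heq; apply: Hinj.
  have [_ H1 N1] := Hidx d1; have [_ H2 N2] := Hidx d2.
  rewrite -N1 -N2 (divn_eq (idx d1) p) (divn_eq (idx d2) p) H1 H2 Heq //.
have := leq_card _ Hf; rewrite !card_ord.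
by rewrite -{1}(prednK hk) ltnn.
Qed.

End Gen.
Lemma arith1 k p q : 3 <= k -> k.-1 <= p -> q <= p -> (k - 2) * (p + 1) + q <= k * p - 1.
Proof. move=> h1 h2 h3; tolia; nia. Qed.
Lemma arith2 n k p : 3 <= k -> 3 * k <= n -> n <= k.-1 * p -> 3 <= p.
Proof. move=> h1 h2 h3; tolia; nia. Qed.
Lemma arith3 n k p : 3 <= k -> 3 <= p -> k.-1 <= p -> n <= k.-1 * p -> n <= k * (p - 2) + k + 1.
Proof. move=> h1 h2 h3 h4; tolia; nia. Qed.

Definition site (n k p c j : nat) : nat :=
  if j == 0 then 0 else if j == p.-1 then c.+1 else minn (k + c * (p - 2) + j) n.-1.

Lemma site_le n k p c j : c < k -> k < n -> site n k p c j <= n.-1.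
Proof.
move=> hc hk; rewrite /site; case: ifP => _ //; case: ifP => _; last exact: geq_minr.
by case: n hk => // n' hk; exact: leq_trans hc hk.
Qed.

Lemma site_L n k p c j d : d < k -> k.+1 < n -> site n k p c j = d.+1 -> j = p.-1.
Proof.
move=> hd hk; rewrite /site; case: ifP => [//|/negbT j0]; case: ifP => [/eqP //|_].
move=> H; have : k.+1 <= minn (k + c * (p - 2) + j) n.-1.
  rewrite leq_min; apply/andP; split.
    rewrite -addnA -addn1 leq_add2l; apply: leq_trans (leq_addl _ _); by rewrite lt0n.
  by move: hk; case: (n).
by rewrite H ltnS leqNgt hd.
Qed.

Lemma site_cover n k p y : 0 < k -> 3 <= p -> k.+1 < n ->
  n <= k * (p - 2) + k + 1 -> y < n ->
  exists c j, [/\ c < k, j < p & site n k p c j = y].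
Proof.
move=> hk hp hkn hn hy.
case: (posnP y) => [->|y0]; first by exists 0, 0; rewrite /site eqxx; split=> //; apply: leq_trans hp.
case: (leqP y k) => hyk.
  exists y.-1, p.-1; split.
  - by rewrite prednK.
  - by rewrite ltn_predL; apply: leq_trans hp.
  - rewrite /site eqxx; case: ifP => [|_]; last by rewrite prednK.
    by move/eqP => H; move: hp H; tolia; lia.
set z := y - k.+1.
have hp2 : 0 < p - 2 by rewrite subn_gt0.
exists (z %/ (p - 2)), (z %% (p - 2)).+1; split.
- rewrite ltn_divLR //; rewrite /z; move: hy hn hyk; tolia; lia.
- have := ltn_pmod z hp2; move: hp; tolia; lia.
- rewrite /site /=; case: ifP => [/eqP E|_].
    have := ltn_pmod z hp2; rewrite -ltnS E => H; exfalso; move: H hp; tolia; lia.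
  have -> : k + z %/ (p - 2) * (p - 2) + (z %% (p - 2)).+1 = y.
    rewrite addnS -addnA -divn_eq /z; move: hyk; tolia; lia.
  apply/minn_idPl; by move: hy; case: (n).
Qed.

Section Gen2.
Variables (n k p : nat) (R : 'I_k -> nat -> 'I_n).

Lemma walk_fun (g : nat -> 'I_k) : forall len t,
  (forall i, t <= i < t + len -> pv_at p R (g i) i.+1 = pv_at p R (g i.+1) i.+1) ->
  realizable p R (pv_at p R (g t) t) t [seq g i | i <- iota t len] /\
  visited p R (pv_at p R (g t) t) t [seq g i | i <- iota t len] =
    [seq pv_at p R (g i) i | i <- iota t len.+1].
Proof.
elim=> [|len IH] t H; first by [].
have H' : forall i, t.+1 <= i < t.+1 + len ->
    pv_at p R (g i) i.+1 = pv_at p R (g i.+1) i.+1.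
  move=> i /andP [h1 h2]; apply: H; rewrite addnS -addSn h2 andbT; exact: ltnW.
have [Hr Hv] := IH t.+1 H'.
have Ht : pv_at p R (g t) t.+1 = pv_at p R (g t.+1) t.+1.
  by apply: H; rewrite leqnn addnS ltnS leq_addr.
by rewrite /= Ht; split=> //; rewrite Hv.
Qed.

End Gen2.

Theorem mainTheorem3 (n k p : nat) :
  9 <= n -> 3 <= k -> 3 * k <= n ->
  maxn k.-1 (ceil_div n k.-1) <= p ->
  exists R : 'I_k -> nat -> 'I_n,
    feasible p R /\
    exists m, is_M p R m /\ (k - 2) * (p + 1) + n %/ k.-1 <= m.
Proof.
case: n => [//|N]; case: k => [//|K] h9 h3 h3k hp.
have hk1 : 0 < K by case: K h3 {h3k hp}.
have hceil : ceil_div N.+1 K.+1.-1 <= p := leq_trans (leq_maxr _ _) hp.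
have hkp : K.+1.-1 <= p := leq_trans (leq_maxl _ _) hp.
have hq : N.+1 %/ K.+1.-1 <= p.
  apply: leq_trans hceil; rewrite /ceil_div; apply: leq_div2r; exact: leq_addr.
have hnp : N.+1 <= K.+1.-1 * p.
  move: hceil; rewrite /ceil_div /= -ltnS ltn_divLR // => H.
  move: H hk1; tolia; nia.
have hp3 : 3 <= p := @arith2 _ _ _ h3 h3k hnp.
have hN : N.+1 <= K.+1 * (p - 2) + K.+1 + 1 := @arith3 _ _ _ h3 hp3 hkp hnp.
have hp0 : 0 < p by apply: leq_trans hp3.
have hkn : K.+2 < N.+1 by move: h3 h3k; tolia; lia.
pose R := fun (c : 'I_K.+1) (t : nat) => (inord (site N.+1 K.+1 p c t) : 'I_N.+1).
exists R.
have hval c t : nat_of_ord (pv_at p R c t) = site N.+1 K.+1 p c (t %% p).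
  rewrite /pv_at /R inordK // ltnS; apply: site_le => //; exact: ltnW.
pose xs := (inord 0 : 'I_N.+1).
have Hstart c : pv_at p R c 0 = xs.
  by apply: ord_inj; rewrite hval mod0n /site eqxx /= inordK.
pose g i := (inord (i %/ p) : 'I_K.+1).
pose W := [seq g i | i <- iota 0 (K.+1 * p)].
have hg i : 0 <= i < 0 + K.+1 * p -> pv_at p R (g i) i.+1 = pv_at p R (g i.+1) i.+1.
  move=> _; case: (boolP (p %| i.+1)) => Hd.
    have H0 : i.+1 %% p = 0 by apply/eqP.
    by apply: ord_inj; rewrite !hval H0 /site eqxx.
  by rewrite /g divnS // (negbTE Hd) add0n.
have [Hr Hv] := @walk_fun _ _ p R g _ 0 hg.
rewrite Hstart in Hr Hv.
have Hcov : concrete_cover p R xs W.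
  move=> y; rewrite /concrete_cover Hv.
  have [c [j [hc hj hs]]] := site_cover _ _ _ y (ltn0Sn K) hp3 hkn hN (ltn_ord y).
  apply/mapP; exists (c * p + j).
    rewrite mem_iota add0n /= ltnS.
    move: hc hj; tolia; apply/leP; rewrite -?plusE -?multE; nia.
  apply: ord_inj; rewrite hval /g divnMDl // divn_small // addn0 modnMDl modn_small //.
  by rewrite inordK.
split.
  move=> c; exists W; rewrite Hstart; split=> //.
pose Ld d := (inord d.+1 : 'I_N.+1).
have HB : forall w, realizable p R xs 0 w -> concrete_cover p R xs w -> K.+1 * p - 1 <= size w.
  apply: (@lower_bound _ _ p R Ld xs) => //.
  - move=> d; apply/negP => /eqP /(congr1 (@nat_of_ord _)); rewrite /= !inordK //.
    by move: (ltn_ord d) hkn; tolia; lia.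
  - move=> d1 d2 /(congr1 (@nat_of_ord _)); rewrite /= !inordK.
    + by move/succn_inj/val_inj.
    + by move: (ltn_ord d1) (ltn_ord d2) hkn; tolia; lia.
    + by move: (ltn_ord d1) (ltn_ord d2) hkn; tolia; lia.
  - move=> c t d /(congr1 (@nat_of_ord _)); rewrite hval /= inordK.
      by move/site_L; apply.
    by move: (ltn_ord d) hkn; tolia; lia.
have [m [HM Hm]] := @is_M_exists _ _ p R (K.+1 * p - 1) W xs
  (fun x0 '(ex_intro c Hc) => etrans (esym Hc) (Hstart c))
  (ex_intro _ ord0 (Hstart ord0)) Hr Hcov HB.
exists m; split=> //; apply: leq_trans Hm; exact: arith1.
Qed.
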